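(* In the troll-farm voting model described in the context, let $(F_0,F_1)$ and $(\hat F_0,\hat F_1)$ be two information structures (both satisfying the model's assumptions), and let $V_\theta^*$ and $\hat V_\theta^*$ denote the government's vote share in state $\theta$ under the sender's optimal strategy under $(F_0,F_1)$ and $(\hat F_0,\hat F_1)$ respectively. If $(\hat F_0,\hat F_1)$ is more informative than $(F_0,F_1)$, then $\hat V_\theta^*\ge V_\theta^*$ for each $\theta\in\{0,1\}$.
   Context: Model. There is an unknown state $\theta\in\{0,1\}$, each state having prior probability $\tfrac12$. There is a continuum of voters of mass one; each voter has a type $x\in\mathbb{R}$, types being distributed according to a cdf $H$ with density $h$ having full support on $\mathbb{R}$. A voter of type $x$ who votes for the government receives payoff $1-x$ if $\theta=1$ and $-x$ if $\theta=0$; voting against gives payoff $0$. An information structure is a pair $(F_0,F_1)$: in state $\theta$, each voter independently draws an informative signal $s\in\mathbb{R}$ from the cdf $F_\theta$, which has a density $f_\theta$ with full support on $\mathbb{R}$, where $f_0(0)=f_1(0)$ and the likelihood ratio $m(s)=f_1(s)/f_0(s)$ is strictly increasing. For $x\in(0,1)$ let $s^*(x)=m^{-1}\!\left(\frac{x}{1-x}\right)$. A sender chooses, for each type $x$, a number $\alpha_x\in[0,1]$ (mass of trolls) and a probability distribution $\tilde F_x$ on $\mathbb{R}$ with density $\tilde f_x$ (trolls' messages, not depending on the state). A voter of type $x$ observes, with probability $1-\alpha_x$, her informative signal, and with probability $\alpha_x$ a message drawn from $\tilde F_x$, without knowing which. After observing $s$ her posterior that $\theta=1$ is $$\pi_x(s)=\frac{(1-\alpha_x)f_1(s)+\alpha_x\tilde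 f_x(s)}{(1-\alpha_x)f_1(s)+\alpha_x\tilde f_x(s)+(1-\alpha_x)f_0(s)+\alpha_x\tilde f_x(s)},$$ and she votes for the government iff $\pi_x(s)\ge x$. Her probability of voting for the government in state $\theta$ is $p_\theta(x)=\int_{\{s:\pi_x(s)\ge x\}}[(1-\alpha_x)f_\theta(s)+\alpha_x\tilde f_x(s)]\,ds$, and the vote share is $V_\theta=\int p_\theta(x)\,dH(x)$. The sender's payoff is $u(V_\theta)$, $u$ strictly increasing; she maximises $\tfrac12u(V_0)+\tfrac12u(V_1)$, and among choices yielding the same vote shares in both states she strictly prefers $(\alpha_x,\tilde F_x)_x$ over $(\alpha'_x,\tilde F'_x)_x$ whenever $\alpha_x\le\alpha'_x$ for all $x$ with strict inequality for some $x$. Under the optimal strategy the vote shares are $V_0^*=H(\tfrac12)+\int_{1/2}^{1}\frac{F_0[s^*(x)]-F_1[s^*(x)]}{xF_0[s^*(x)]-(1-x)F_1[s^*(x)]}(1-x)\,dH(x)$ and $V_1^*=H(\tfrac12)+\int_{1/2}^{1}\frac{F_0[s^*(x)]-F_1[s^*(x)]}{xF_0[s^*(x)]-(1-x)F_1[s^*(x)]}\,x\,dH(x)$. Definition (informativeness): $(\hat F_0,\hat F_1)$ is more informative than $(F_0,F_1)$ iff for all $x\in(0,1)$, $\hat F_0[\hat s^*(x)]\ge F_0[s^*(x)]$ and $\hat F_1[\hat s^*(x)]\le F_1[s^*(x)]$, where $\hat s^*(x)=\hat m^{-1}\!\left(\frac{x}{1-x}\right)$ with $\hat m=\hat f_1/\hat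 f_0$. *)

(* Defs.v *)
From HB Require Import structures.
From mathcomp Require Import all_boot all_order all_algebra.
From mathcomp Require Import all_classical all_reals all_analysis.
Set Implicit Arguments. Unset Strict Implicit. Unset Printing Implicit Defensive.
Import Order.TTheory GRing.Theory Num.Theory.
Local Open Scope classical_set_scope.
Local Open Scope ring_scope.

Section TrollDefs.
Variable R : realType.
Local Notation mu := (@lebesgue_measure R).

Definition cdf_with_density (G g : R -> R) : Prop :=
  [/\ measurable_fun setT g,
      (forall x, 0 < g x),
      (\int[mu]_(x in [set: R]) (g x)%:E = 1)%E
    & (forall x, (G x)%:E = (\int[mu]_(y in `]-oo, x]) (g y)%:E)%E)].

Definition lik_ratio (f0 f1 : R -> R) (s : R) : R := f1 s / f0 s.

Definition info_structure (F0 F1 f0 f1 : R -> R) : Prop :=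
  [/\ cdf_with_density F0 f0, cdf_with_density F1 f1,
      f0 0 = f1 0
    & {homo lik_ratio f0 f1 : a b / a < b}].

Definition is_sstar (f0 f1 : R -> R) (sstar : R -> R) : Prop :=
  forall x, 0 < x < 1 -> lik_ratio f0 f1 (sstar x) = x / (1 - x).

Definition ratio_term (F0 F1 sstar : R -> R) (x : R) : R :=
  (F0 (sstar x) - F1 (sstar x)) / (x * F0 (sstar x) - (1 - x) * F1 (sstar x)).

(* Vote shares under the optimal strategy (formulas given in the model);
   the integral against dH is written with the density h. *)
Definition Vstar0 (H h F0 F1 sstar : R -> R) : \bar R :=
  ((H (2^-1))%:E + \int[mu]_(x in [set x : R | (2^-1 < x < 1)%R])
      (ratio_term F0 F1 sstar x * (1 - x) * h x)%:E)%E.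

Definition Vstar1 (H h F0 F1 sstar : R -> R) : \bar R :=
  ((H (2^-1))%:E + \int[mu]_(x in [set x : R | (2^-1 < x < 1)%R])
      (ratio_term F0 F1 sstar x * x * h x)%:E)%E.

Definition more_informative (Fh0 Fh1 sh F0 F1 s : R -> R) : Prop :=
  forall x, 0 < x < 1 -> F0 (s x) <= Fh0 (sh x) /\ Fh1 (sh x) <= F1 (s x).

End TrollDefs.

(* Main.v *)
From HB Require Import structures.
From mathcomp Require Import all_boot all_order all_algebra.
From mathcomp Require Import all_classical all_reals all_analysis.
Require Import Defs.
From mathcomp Require Import ring lra.
Import Order.TTheory GRing.Theory Num.Theory.
Local Open Scope classical_set_scope.
Local Open Scope ring_scope.

Section Aux.
Variable R : realType.
Local Notation mu := (@lebesgue_measure R).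

Lemma le_ge0_int (D : set R) (F G : R -> \bar R) :
  (forall x, D x -> (0 <= F x)%E) -> (forall x, D x -> (F x <= G x)%E) ->
  (\int[mu]_(x in D) F x <= \int[mu]_(x in D) G x)%E.
Proof.
move=> F0 FG.
have G0 : forall x, D x -> (0 <= G x)%E by move=> x Dx; exact: le_trans (F0 x Dx) (FG x Dx).
rewrite (ge0_integralE mu F0) (ge0_integralE mu G0).
apply: le_ereal_sup => _ [h /= hF <-]; exists h => //= y.
apply: le_trans (hF y) _; rewrite /patch; case: ifPn => // /set_mem Dy.
exact: FG.
Qed.

Lemma le_int_mono (D : set R) (F G : R -> \bar R) :
  (forall x, D x -> (F x <= G x)%E) ->
  (\int[mu]_(x in D) F x <= \int[mu]_(x in D) G x)%E.
Proof.
move=> FG; rewrite (integralE mu D F) (integralE mu D G).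
have FG' : {in D, forall x, (F x <= G x)%E} by move=> x /set_mem; exact: FG.
apply: leeB; apply: le_ge0_int => x Dx.
- exact: funepos_ge0.
- by apply: (funepos_le FG'); exact/mem_set.
- exact: funeneg_ge0.
- by apply: (funeneg_le FG'); exact/mem_set.
Qed.

Lemma int_gt0 (D E : set R) (f : R -> R) : measurable D -> measurable E ->
  E `<=` D -> (0 < mu E)%E -> measurable_fun D f ->
  (forall x, D x -> 0 <= f x) -> (forall x, E x -> 0 < f x) ->
  (0 < \int[mu]_(x in D) (f x)%:E)%E.
Proof.
move=> mD mE ED muE mf f0 fE.
have mfD := proj2 (measurable_realfun.measurable_EFinP D f) mf.
have mfE := measurable_funS mD ED mfD.
apply: (lt_le_trans _ (ge0_subset_integral mu mE mD mfD _ ED)); last first.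
  by move=> x Dx; rewrite lee_fin f0.
rewrite lt_neqAle integral_ge0 ?andbT; last by move=> x Ex; rewrite lee_fin ltW ?fE.
apply/negP => /eqP H0.
pose S n := E `&` [set x | (n.+1%:R^-1)%:E <= `|(f x)%:E|]%E.
have S0 n : mu (S n) = 0.
  have := le_integral_abse mu mE mfE (a := n.+1%:R^-1) ltac:(by rewrite invr_gt0).
  have -> : (\int[mu]_(x in E) `|(f x)%:E| = \int[mu]_(x in E) (f x)%:E)%E.
    apply: eq_integral => x /set_mem Ex; rewrite gee0_abs // lee_fin ltW ?fE //.
  rewrite -H0 => H.
  apply/eqP; rewrite eq_le measure_ge0 andbT.
  rewrite leNgt; apply/negP => Hp.
  have : (0 < (n.+1%:R^-1)%:E * mu (S n))%E by rewrite mule_gt0 // lte_fin invr_gt0.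
  by rewrite ltNge H.
have mS n : measurable (S n).
  have -> : S n = E `&` f @^-1` `[n.+1%:R^-1, +oo[.
    apply/seteqP; split => x [Ex] /=.
      by rewrite lee_fin ger0_norm ?(ltW (fE x Ex)) // => H; split; rewrite // in_itv /= H.
    rewrite in_itv /= andbT => H; split => //=.
    by rewrite lee_fin ger0_norm ?(ltW (fE x Ex)).
  exact: (measurable_funS mD ED mf) mE _ (measurable_itv _).
have mS0 n : mu.-negligible (S n).
  exists (S n); split; [exact: mS|exact: S0|by []].
have negS : mu.-negligible (\bigcup_n S n).
  exact: negligible_bigcup mS0.
have ES : E `<=` \bigcup_n S n.
  move=> x Ex; exists (Num.trunc (f x)^-1) => //; split => //=.
  rewrite lee_fin ger0_norm ?(ltW (fE x Ex)) //.
  rewrite ltW // -invf_plt ?posrE ?(fE x Ex) //.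
  exact: truncnS_gt.
case: negS => B [mB muB EB].
have : (mu E <= mu B)%E.
  apply: le_measure; rewrite ?inE //.
  exact: subset_trans ES EB.
by rewrite muB leNgt muE.
Qed.

Lemma cdf_ge0 (G g : R -> R) : cdf_with_density G g -> forall t, 0 <= G t.
Proof.
case=> _ gpos _ GE t; rewrite -lee_fin GE.
by apply: integral_ge0 => y _; rewrite lee_fin ltW.
Qed.

Lemma F1_lt (F0 F1 f0 f1 : R -> R) (c : R) : info_structure F0 F1 f0 f1 ->
  F1 c < lik_ratio f0 f1 c * F0 c.
Proof.
case=> [[mf0 f0pos _ F0E] [mf1 f1pos _ F1E] _ hom].
set m := lik_ratio f0 f1 c.
have m0 : 0 < m by rewrite /m /lik_ratio divr_gt0.
pose D : set R := [set` `]-oo, c]].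
pose E : set R := [set` `]c - 1, c[].
have mD : measurable D by exact: measurable_itv.
have mE : measurable E by exact: measurable_itv.
have ED : E `<=` D.
  move=> t; rewrite /E /D /= !in_itv /= => /andP[_ tc]; exact: ltW.
have f1E t : f1 t = lik_ratio f0 f1 t * f0 t.
  by rewrite /lik_ratio divfK // gt_eqF.
pose k t := m * f0 t - f1 t.
have k0 t : D t -> 0 <= k t.
  rewrite /D /= in_itv /= => tc; rewrite /k f1E -mulrBl.
  apply: mulr_ge0; last exact: ltW.
  rewrite subr_ge0.
  move: tc; rewrite le_eqVlt => /orP[/eqP -> //|tc].
  exact/ltW/hom.
have kE t : E t -> 0 < k t.
  rewrite /E /= in_itv /= => /andP[_ tc]; rewrite /k f1E -mulrBl mulr_gt0 //.
  by rewrite subr_gt0; apply: hom.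
have mf0D := measurable_funS measurableT (subsetT D) mf0.
have mf1D := measurable_funS measurableT (subsetT D) mf1.
have mk : measurable_fun D k.
  apply: measurable_realfun.measurable_funB; last exact: (measurable_funS measurableT (subsetT D) mf1).
  apply: measurable_realfun.measurable_funM; last exact: (measurable_funS measurableT (subsetT D) mf0).
  exact: measurable_cst.
have muE : (0 < mu E)%E.
  rewrite /E lebesgue_measure_itv /= lte_fin ltrBlDr ltrDl ltr01.
  by rewrite -EFinB lte_fin subr_gt0 ltrBlDr ltrDl ltr01.
have kpos := int_gt0 D E k mD mE ED muE mk k0 kE.
have H : ((m * F0 c)%R%:E = (F1 c)%:E + \int[mu]_(x in D) (k x)%:E)%E.
  rewrite EFinM F0E F1E -ge0_integralZl_EFin //; last 3 first.
  - by move=> x _; rewrite lee_fin ltW.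
  - apply/measurable_realfun.measurable_EFinP.
    exact: (measurable_funS measurableT (subsetT D) mf0).
  - exact: ltW.
  rewrite -(ge0_integralD mu mD); last 4 first.
  - by move=> x _; rewrite lee_fin ltW.
  - apply/measurable_realfun.measurable_EFinP.
    exact: (measurable_funS measurableT (subsetT D) mf1).
  - by move=> x Dx; rewrite lee_fin k0.
  - exact/measurable_realfun.measurable_EFinP.
  by apply: eq_integral => x _; rewrite -EFinD /k addrC subrK -EFinM.
by rewrite -lte_fin H lteDl.
Qed.

Lemma ratio_le (x a b a' b' : R) : 2^-1 < x < 1 ->
  0 <= a -> 0 <= b -> 0 <= b' -> a <= a' -> b' <= b ->
  0 < x * a - (1 - x) * b -> 0 < x * a' - (1 - x) * b' ->
  (a - b) / (x * a - (1 - x) * b) <= (a' - b') / (x * a' - (1 - x) * b').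
Proof.
move=> /andP[x1 x2] a0 b0 b'0 aa bb D0 D'0.
rewrite ler_pdivrMr // mulrAC ler_pdivlMr //.
have x21 : 0 < 2 * x - 1.
  by rewrite subr_gt0 -ltr_pdivrMl ?mulr1 //.
have P : 0 <= a' * b - a * b'.
  have -> : a' * b - a * b' = (a' - a) * b + a * (b - b') by ring.
  by apply: addr_ge0; apply: mulr_ge0; rewrite ?subr_ge0.
have -> : (a' - b') * (x * a - (1 - x) * b) =
   (a - b) * (x * a' - (1 - x) * b') + (2 * x - 1) * (a' * b - a * b') by ring.
by rewrite lerDl mulr_ge0 // ltW.
Qed.

Lemma D_pos (F0 F1 f0 f1 s : R -> R) (x : R) : info_structure F0 F1 f0 f1 ->
  is_sstar f0 f1 s -> 0 < x < 1 -> 0 < x * F0 (s x) - (1 - x) * F1 (s x).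
Proof.
move=> I S /andP[x0 x1].
have := F1_lt F0 F1 f0 f1 (s x) I; rewrite S ?x0 ?x1 // => H.
have x1' : 0 < 1 - x by rewrite subr_gt0.
rewrite -(ltr_pM2l x1') in H.
have E : (1 - x) * (x / (1 - x) * F0 (s x)) = x * F0 (s x).
  by field; rewrite gt_eqF.
by rewrite subr_gt0 -E.
Qed.
End Aux.

Theorem proposition2 (R : realType) (H h : R -> R)
    (F0 F1 f0 f1 s Fh0 Fh1 fh0 fh1 sh : R -> R) :
  cdf_with_density H h ->
  info_structure F0 F1 f0 f1 -> is_sstar f0 f1 s ->
  info_structure Fh0 Fh1 fh0 fh1 -> is_sstar fh0 fh1 sh ->
  more_informative Fh0 Fh1 sh F0 F1 s ->
  (Vstar0 H h F0 F1 s <= Vstar0 H h Fh0 Fh1 sh)%E /\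
  (Vstar1 H h F0 F1 s <= Vstar1 H h Fh0 Fh1 sh)%E.
Proof.
move=> cH I S Ih Sh MI.
have hpos : forall x, 0 <= h x by case: cH => _ hp _ _ x; exact: ltW.
have key x : 2^-1 < x < 1 ->
    ratio_term F0 F1 s x <= ratio_term Fh0 Fh1 sh x.
  move=> /[dup] hx /andP[x1 x2].
  have x0 : 0 < x by apply: lt_trans x1; rewrite invr_gt0.
  have x01 : 0 < x < 1 by rewrite x0 x2.
  have [aa bb] := MI x x01.
  have [cF0 cF1 _ _] := I; have [cFh0 cFh1 _ _] := Ih.
  apply: ratio_le => //.
  - exact: (@cdf_ge0 R _ _ cF0 _).
  - exact: (@cdf_ge0 R _ _ cF1 _).
  - exact: (@cdf_ge0 R _ _ cFh1 _).
  - exact: (@D_pos R _ _ _ _ _ _ I S x01).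
  - exact: (@D_pos R _ _ _ _ _ _ Ih Sh x01).
split; rewrite /Vstar0 /Vstar1 leeD2l //; apply: le_int_mono => x /= hx;
  rewrite lee_fin; apply: ler_wpM2r => //; apply: ler_wpM2r; rewrite ?key //.
- by case/andP: hx => _ ?; rewrite subr_ge0 ltW.
- case/andP: hx => ? _; apply: ltW; apply: lt_trans _ _; last by eassumption.
  by rewrite invr_gt0.
Qed.
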